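(* Let $\alpha_1,\alpha_2$ be nonzero real constants with $\alpha_1\neq\alpha_2$, and consider the lattice Schwarzian KdV equation for a field $x_{n,m}$, $(n,m)\in\mathbb{Z}^2$: $$\mathbb{Q}\equiv \alpha_1 (x_{n,m}-x_{n,m+1})(x_{n+1,m}-x_{n+1,m+1})-\alpha_2 (x_{n,m}-x_{n+1,m})(x_{n,m+1}-x_{n+1,m+1})=0.$$ Consider infinitesimal generators of the form $\widehat X_{n,m}=\Phi_{n,m}(x_{n,m})\,\partial_{x_{n,m}}$, where for each $(n,m)$ the function $\Phi_{n,m}$ is a polynomial $\Phi_{n,m}(x)=\sum_{k=0}^{\gamma}\Phi^{(k)}_{n,m}x^k$ with coefficients $\Phi^{(k)}_{n,m}$ depending on $(n,m)$. Then $\widehat X_{n,m}$ is a Lie point symmetry of $\mathbb{Q}=0$ if and only if $$\Phi_{n,m}(x)=c_0+c_1 x+c_2 x^2$$ with constants $c_0,c_1,c_2$ independent of $n$ and $m$. Equivalently, the Lie point symmetry algebra (of this form) is spanned by $\widehat X^{(0)}=\partial_{x_{n,m}}$, $\widehat X^{(1)}=x_{n,m}\partial_{x_{n,m}}$, $\widehat X^{(2)}=x_{n,m}^2\partial_{x_{n,m}}$, which satisfy $[\widehat X^{(0)},\widehat X^{(1)}]=\widehat X^{(0)}$, $[\widehat X^{(1)},\widehat X^{(2)}]=\widehat X^{(2)}$, $[\widehat X^{(0)},\widehat X^{(2)}]=2\widehat X^{(1)}$, i.e. form a Lie algebra isomorphic to $\mathfrak{sl}(2)$.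
   Context: A generator $\widehat X_{n,m}=\Phi_{n,m}\,\partial_{x_{n,m}}$ is called a (Lie point) symmetry of $\mathbb{Q}=0$ if its prolongation annihilates $\mathbb{Q}$ on solutions, i.e. $$\Phi_{n,m}\frac{\partial \mathbb{Q}}{\partial x_{n,m}}+\Phi_{n+1,m}\frac{\partial \mathbb{Q}}{\partial x_{n+1,m}}+\Phi_{n,m+1}\frac{\partial \mathbb{Q}}{\partial x_{n,m+1}}+\Phi_{n+1,m+1}\frac{\partial \mathbb{Q}}{\partial x_{n+1,m+1}}=0$$ whenever $\mathbb{Q}=0$ (concretely: after solving $\mathbb{Q}=0$ for $x_{n+1,m+1}$ in terms of $x_{n,m},x_{n+1,m},x_{n,m+1}$ and substituting, the expression vanishes identically in $x_{n,m},x_{n+1,m},x_{n,m+1}$). Here $\Phi_{n+i,m+j}$ denotes $\Phi_{n+i,m+j}(x_{n+i,m+j})$. *)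

(* Defs.v *)
From HB Require Import structures.
From mathcomp Require Import all_boot all_order all_algebra.
From mathcomp Require Import reals.
Set Implicit Arguments. Unset Strict Implicit. Unset Printing Implicit Defensive.
Import Order.TTheory GRing.Theory Num.Theory.
Local Open Scope ring_scope.

Section LSKdV.
Variable R : realType.
Variables al1 al2 : R.

(* Q(a,b,c,d) with a = x_{n,m}, b = x_{n+1,m}, c = x_{n,m+1}, d = x_{n+1,m+1} *)
Definition lskdvQ (a b c d : R) : R :=
  al1 * (a - c) * (b - d) - al2 * (a - b) * (c - d).

Definition dQ_a (a b c d : R) : R := al1 * (b - d) - al2 * (c - d).
Definition dQ_b (a b c d : R) : R := al1 * (a - c) + al2 * (c - d).
Definition dQ_c (a b c d : R) : R := - al1 * (b - d) - al2 * (a - b).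
Definition dQ_d (a b c d : R) : R := - al1 * (a - c) + al2 * (a - b).

(* Q = A * d + B, with A the coefficient of x_{n+1,m+1}. *)
Definition lskdvA (a b c : R) : R := al2 * (a - b) - al1 * (a - c).
Definition lskdvB (a b c : R) : R := al1 * (a - c) * b - al2 * (a - b) * c.
(* The solution of Q = 0 for x_{n+1,m+1} (when lskdvA a b c != 0). *)
Definition lskdv_x11 (a b c : R) : R := - lskdvB a b c / lskdvA a b c.

(* Lie point symmetry condition for the generator Phi_{n,m}(x_{n,m}) d_{x_{n,m}}:
   after solving Q = 0 for x_{n+1,m+1} and substituting, the prolonged
   generator applied to Q vanishes identically in x_{n,m}, x_{n+1,m}, x_{n,m+1}
   (i.e. at every point where the solving is possible). *)
Definition is_lie_point_symmetry (Phi : int -> int -> {poly R}) : Prop :=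
  forall (n m : int) (a b c : R), lskdvA a b c != 0 ->
    let d := lskdv_x11 a b c in
    (Phi n m).[a] * dQ_a a b c d
    + (Phi (n + 1) m).[b] * dQ_b a b c d
    + (Phi n (m + 1)).[c] * dQ_c a b c d
    + (Phi (n + 1) (m + 1)).[d] * dQ_d a b c d = 0.
End LSKdV.

(* Lie bracket of one-component vector fields f d_x and g d_x:
   [f d_x, g d_x] = (f g' - g f') d_x. *)
Definition vf_bracket (R : ringType) (f g : {poly R}) : {poly R} :=
  f * g^`() - g * f^`().

(* Main.v *)
Require Import Defs.
From HB Require Import structures.
From mathcomp Require Import all_boot all_order all_algebra.
From mathcomp Require Import reals.
From mathcomp Require Import ring lra.
Import Order.TTheory GRing.Theory Num.Theory.
Local Open Scope ring_scope.

Lemma poly_nz_root (R : realType) (p : {poly R}) :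
  (forall t, t != 0 -> p.[t] = 0) -> p = 0.
Proof.
move=> H; apply/eqP; apply/negP => /negP pn0.
pose rs := [seq (i.+1)%:R : R | i <- iota 0 (size p)].
have : (size rs < size p)%N.
  apply: max_poly_roots pn0 _ _.
  apply/allP => x /mapP [i _ ->]; apply/eqP/H; by rewrite pnatr_eq0.
rewrite map_inj_uniq ?iota_uniq // => i j /eqP; rewrite eqr_nat => /eqP; by case.
by rewrite size_map size_iota ltnn.
Qed.

Lemma int_const (T : Type) (f : int -> T) :
  (forall n, f (n + 1) = f n) -> forall n, f n = f 0.
Proof.
move=> H.
have Hp : forall k : nat, f k = f 0.
  elim=> [//|k IH]; by rewrite intS addrC H.
case=> [k|k]; first exact: Hp.
rewrite NegzE; elim: k => [|k IH].
  by rewrite -H addrC subrr.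
rewrite -IH.
have -> : (- (k.+1)%:Z) = - (k.+2)%:Z + 1.
  by rewrite (intS k.+1) opprD addrC addNKr.
by rewrite H.
Qed.
Section S0.
Variable R : realType.
Variables al1 al2 : R.

Lemma x11_Q a b c : lskdvA al1 al2 a b c != 0 ->
  lskdvQ al1 al2 a b c (lskdv_x11 al1 al2 a b c) = 0.
Proof.
move=> hA; rewrite /lskdvQ /lskdv_x11.
have -> : forall d, al1 * (a - c) * (b - d) - al2 * (a - b) * (c - d)
   = lskdvA al1 al2 a b c * d + lskdvB al1 al2 a b c.
  move=> d; rewrite /lskdvA /lskdvB; ring.
by field.
Qed.

Lemma quad_sym (c0 c1 c2 : R) a b c : lskdvA al1 al2 a b c != 0 ->
  let q := c0%:P + c1 *: 'X + c2 *: 'X^2 in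
  let d := lskdv_x11 al1 al2 a b c in
  q.[a] * dQ_a al1 al2 a b c d + q.[b] * dQ_b al1 al2 a b c d
  + q.[c] * dQ_c al1 al2 a b c d + q.[d] * dQ_d al1 al2 a b c d = 0.
Proof.
move=> hA q d.
have hQ := @x11_Q a b c hA; rewrite -/d in hQ.
clearbody d; rewrite /q !(hornerD, hornerC, hornerZ, hornerX, hornerXn).
transitivity ((c1 *+ 2 + c2 * (a + b + c + d)) * lskdvQ al1 al2 a b c d).
  rewrite /dQ_a /dQ_b /dQ_c /dQ_d /lskdvQ; ring.
by rewrite hQ mulr0.
Qed.
End S0.
Section S.
Variable R : realType.
Variables al1 al2 : R.
Hypotheses (h1 : al1 != 0) (h2 : al2 != 0) (h12 : al1 != al2).

Lemma x11_eq a b c d0 : lskdvA al1 al2 a b c != 0 ->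
  lskdvB al1 al2 a b c = - lskdvA al1 al2 a b c * d0 ->
  lskdv_x11 al1 al2 a b c = d0.
Proof. move=> hA; rewrite /lskdv_x11 => ->; by field. Qed.

Lemma sym_loc (Phi : int -> int -> {poly R}) n m :
  is_lie_point_symmetry al1 al2 Phi ->
  Phi (n + 1) m = Phi n m /\ Phi n (m + 1) = Phi n m.
Proof.
move=> H.
have hs : al1 - al2 != 0 by rewrite subr_eq0.
set P := Phi n m; set Q1 := Phi (n + 1) m; set Q2 := Phi n (m + 1);
set Q3 := Phi (n + 1) (m + 1).
have key : forall x, Q1.[x] = P.[x] /\ Q2.[x] = P.[x].
  move=> x.
  have hA1 : lskdvA al1 al2 x (x + 1) x != 0.
    by rewrite /lskdvA (_ : al2 * (x - (x + 1)) - al1 * (x - x) = - al2) ?oppr_eq0 //; ring.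
  have H1 := H n m x (x + 1) x hA1; rewrite /= in H1.
  rewrite (@x11_eq _ _ _ x hA1) in H1; last by rewrite /lskdvA /lskdvB; ring.
  rewrite -/P -/Q1 -/Q2 -/Q3 in H1.
  have E1 : al1 * P.[x] - (al1 - al2) * Q2.[x] - al2 * Q3.[x] = 0.
    apply: (etrans _ H1); rewrite /dQ_a /dQ_b /dQ_c /dQ_d; ring.
  have hA2 : lskdvA al1 al2 x x (x + 1) != 0.
    by rewrite /lskdvA (_ : al2 * (x - x) - al1 * (x - (x + 1)) = al1) //; ring.
  have H2 := H n m x x (x + 1) hA2; rewrite /= in H2.
  rewrite (@x11_eq _ _ _ x hA2) in H2; last by rewrite /lskdvA /lskdvB; ring.
  rewrite -/P -/Q1 -/Q2 -/Q3 in H2.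
  have E2 : - al2 * P.[x] - (al1 - al2) * Q1.[x] + al1 * Q3.[x] = 0.
    apply: (etrans _ H2); rewrite /dQ_a /dQ_b /dQ_c /dQ_d; ring.
  have hA3 : lskdvA al1 al2 (x - 1) x x != 0.
    by rewrite /lskdvA (_ : al2 * (x - 1 - x) - al1 * (x - 1 - x) = al1 - al2) //; ring.
  have H3 := H n m (x - 1) x x hA3; rewrite /= in H3.
  rewrite (@x11_eq _ _ _ x hA3) in H3; last by rewrite /lskdvA /lskdvB; ring.
  rewrite -/P -/Q1 -/Q2 -/Q3 in H3.
  have E3 : - al1 * Q1.[x] + al2 * Q2.[x] + (al1 - al2) * Q3.[x] = 0.
    apply: (etrans _ H3); rewrite /dQ_a /dQ_b /dQ_c /dQ_d; ring.
  have hw : Q3.[x] - P.[x] = 0.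
    have : 2%:R * al1 * al2 * (Q3.[x] - P.[x]) =
      - (al1 - al2) * (- al1 * Q1.[x] + al2 * Q2.[x] + (al1 - al2) * Q3.[x])
      + al1 * (- al2 * P.[x] - (al1 - al2) * Q1.[x] + al1 * Q3.[x])
      - al2 * (al1 * P.[x] - (al1 - al2) * Q2.[x] - al2 * Q3.[x]) by ring.
    rewrite E1 E2 E3 !(mulr0, addr0, subr0, oppr0) => /eqP.
    by rewrite !mulf_eq0 (negbTE h1) (negbTE h2) pnatr_eq0 /= => /eqP.
  split; apply/eqP; rewrite -subr_eq0.
    have : (al1 - al2) * (Q1.[x] - P.[x]) =
      - (- al2 * P.[x] - (al1 - al2) * Q1.[x] + al1 * Q3.[x])
      + al1 * (Q3.[x] - P.[x]) by ring.
    rewrite E2 hw !(mulr0, addr0, subr0, oppr0) => /eqP.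
    by rewrite mulf_eq0 (negbTE hs).
  have : (al1 - al2) * (Q2.[x] - P.[x]) =
    - (al1 * P.[x] - (al1 - al2) * Q2.[x] - al2 * Q3.[x])
    - al2 * (Q3.[x] - P.[x]) by ring.
  rewrite E1 hw !(mulr0, addr0, subr0, oppr0) => /eqP.
  by rewrite mulf_eq0 (negbTE hs).
split; apply/eqP; rewrite -subr_eq0; apply/eqP; apply: poly_nz_root => t _;
  rewrite hornerD hornerN; case: (key t) => K1 K2; by rewrite ?K1 ?K2 subrr.
Qed.
End S.
Section T.
Variable R : realType.
Variables al1 al2 : R.
Hypotheses (h1 : al1 != 0) (h2 : al2 != 0) (h12 : al1 != al2).

Lemma poly_nz_pt (p : {poly R}) : p != 0 -> exists t, p.[t] != 0.
Proof.
move=> pn0.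
pose rs := [seq i%:R : R | i <- iota 0 (size p)].
have : ~~ all (root p) rs.
  apply/negP => hall.
  have : (size rs < size p)%N.
    apply: max_poly_roots pn0 hall _.
    rewrite map_inj_uniq ?iota_uniq // => i j /eqP; rewrite eqr_nat => /eqP.
  by [].
  by rewrite /rs size_map size_iota ltnn.
by case/allPn => t _ ht; exists t.
Qed.

Definition mu k := (al1 - al2) * k / (al1 * k - al2).
Definition ea k := al1 * (1 - mu k) - al2 * (k - mu k).
Definition eb k := - al1 * k + al2 * (k - mu k).
Definition ec k := - al1 * (1 - mu k) + al2.
Definition ed k := al1 * k - al2.
Definition fi i k := eb k + ec k * k ^+ i + ed k * (mu k) ^+ i.

Lemma fi_ident j k : al1 * k - al2 != 0 ->
  (al1 * k - al2) ^+ j.+2 * fi j.+2 k =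
  (al1 - al2) * k ^+ 2 * (- al1 * (al1 * k - al2) ^+ j.+1
     + al2 * k ^+ j * (al1 * k - al2) ^+ j.+1
     + (al1 - al2) ^+ j.+1 * k ^+ j * (al1 * k - al2)).
Proof.
move=> hD.
have hDj : (al1 * k - al2) ^+ j != 0 by rewrite expf_neq0.
rewrite /fi /eb /ec /ed /mu expr_div_n !exprMn !exprS.
field.
by rewrite hDj hD.
Qed.

Lemma exists_k i : (3 <= i)%N -> exists k, al1 * k - al2 != 0 /\ fi i k != 0.
Proof.
case: i => [|[|[|j]]] // _.
set J := j.+1.
have [Dp hDp] : {Dp : {poly R} | forall x, Dp.[x] = al1 * x - al2}.
  exists (al1 *: 'X - al2%:P) => x.
  by rewrite hornerD hornerN hornerZ hornerX hornerC.
pose gp : {poly R} := - al1 *: Dp ^+ J.+1 + al2 *: ('X^J * Dp ^+ J.+1)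
   + (al1 - al2) ^+ J.+1 *: ('X^J * Dp).
have hgp : forall x, gp.[x] = - al1 * (al1 * x - al2) ^+ J.+1
     + al2 * x ^+ J * (al1 * x - al2) ^+ J.+1
     + (al1 - al2) ^+ J.+1 * x ^+ J * (al1 * x - al2).
  move=> x; rewrite /gp !hornerD !hornerZ (hornerM 'X^J (Dp ^+ J.+1)) (hornerM 'X^J Dp) !horner_exp hornerX !hDp.
  by rewrite !mulrA.
have hX0 : ('X : {poly R}) != 0 by rewrite polyX_eq0.
have hD0 : Dp != 0.
  apply/negP => /eqP D0; have := hDp 0; rewrite D0 horner0 mulr0 sub0r.
  by move/eqP; rewrite eq_sym oppr_eq0 (negbTE h2).
have hg0 : gp != 0.
  apply/negP => /eqP G0; have := hgp 0; rewrite G0 horner0 expr0n /= !(mulr0, mul0r, addr0, sub0r, add0r).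
  move/eqP; rewrite eq_sym mulf_eq0 oppr_eq0 (negbTE h1) /= expf_eq0 /= oppr_eq0.
  by rewrite (negbTE h2).
have [k hk] := poly_nz_pt _ (mulf_neq0 (mulf_neq0 hX0 hD0) hg0).
move: hk; rewrite !hornerM hornerX hDp hgp !mulf_eq0 !negb_or => /andP[/andP[k0 hD] hg].
exists k; split => //.
have := fi_ident J k hD.
have hs : al1 - al2 != 0 by rewrite subr_eq0.
move=> E; apply/negP => /eqP F0; move: E; rewrite F0 mulr0 => /eqP.
by rewrite eq_sym !mulf_eq0 (negbTE hs) (negbTE k0) (negbTE hg).
Qed.
Lemma x11_eq' a b c d0 : lskdvA al1 al2 a b c != 0 ->
  lskdvB al1 al2 a b c = - lskdvA al1 al2 a b c * d0 ->
  lskdv_x11 al1 al2 a b c = d0.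
Proof. move=> hA; rewrite /lskdv_x11 => ->; by field. Qed.

Lemma coef_vanish (F : {poly R}) :
  (forall a b c, lskdvA al1 al2 a b c != 0 ->
    let d := lskdv_x11 al1 al2 a b c in
    F.[a] * dQ_a al1 al2 a b c d + F.[b] * dQ_b al1 al2 a b c d
    + F.[c] * dQ_c al1 al2 a b c d + F.[d] * dQ_d al1 al2 a b c d = 0) ->
  forall k, al1 * k - al2 != 0 -> forall i, (0 < i)%N -> F`_i * fi i k = 0.
Proof.
move=> H k hk i hi.
pose S := \poly_(j < size F) (F`_j * fi j k).
have HS : forall t, t != 0 -> (S - (- (F.[0] * ea k))%:P).[t] = 0.
  move=> t ht.
  have hA : lskdvA al1 al2 0 t (k * t) != 0.
    rewrite (_ : lskdvA al1 al2 0 t (k * t) = t * (al1 * k - al2)) ?mulf_neq0 //.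
    rewrite /lskdvA; ring.
  have Ht := H 0 t (k * t) hA; rewrite /= in Ht.
  rewrite (@x11_eq' 0 t (k * t) (mu k * t) hA) in Ht; last first.
    rewrite /lskdvB /lskdvA /mu; field; done.
  have ES : S.[t] = eb k * F.[t] + ec k * F.[k * t] + ed k * F.[mu k * t].
    rewrite horner_poly !horner_coef !mulr_sumr -!big_split /=.
    apply: eq_bigr => j _; rewrite [(k * t) ^+ _]exprMn [(mu k * t) ^+ _]exprMn /fi; ring.
  have : t * (F.[0] * ea k + S.[t]) = 0.
    rewrite -[RHS]Ht ES /dQ_a /dQ_b /dQ_c /dQ_d /ea /eb /ec /ed; ring.
  move/eqP; rewrite mulf_eq0 (negbTE ht) /= addrC addr_eq0 => /eqP E.
  by rewrite hornerD hornerN hornerC E subrr.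
have HS0 := @poly_nz_root R _ HS.
have := congr1 (fun p : {poly R} => p`_i) HS0.
have i0 : (i == 0)%N = false by case: i hi.
rewrite /= coefB coefC i0 subr0 coef0 coef_poly.
case: ifP => // /negbT; rewrite -leqNgt => hsz _.
by rewrite nth_default // mul0r.
Qed.

Lemma deg_le2 (F : {poly R}) :
  (forall a b c, lskdvA al1 al2 a b c != 0 ->
    let d := lskdv_x11 al1 al2 a b c in
    F.[a] * dQ_a al1 al2 a b c d + F.[b] * dQ_b al1 al2 a b c d
    + F.[c] * dQ_c al1 al2 a b c d + F.[d] * dQ_d al1 al2 a b c d = 0) ->
  forall i, (3 <= i)%N -> F`_i = 0.
Proof.
move=> H i hi.
have [k [hk hf]] := @exists_k i hi.
have /eqP := @coef_vanish F H k hk i (leq_trans (isT : (0 < 3)%N) hi).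
by rewrite mulf_eq0 (negbTE hf) orbF => /eqP.
Qed.
End T.

Theorem mainTheorem1 (R : realType) (al1 al2 : R)
  (h1 : al1 != 0) (h2 : al2 != 0) (h12 : al1 != al2) :
  (forall Phi : int -> int -> {poly R},
     is_lie_point_symmetry al1 al2 Phi <->
     exists c0 c1 c2 : R, forall n m : int,
       Phi n m = c0%:P + c1 *: 'X + c2 *: 'X^2)
  /\ (vf_bracket (1 : {poly R}) 'X = 1
      /\ vf_bracket ('X : {poly R}) ('X^2) = 'X^2
      /\ vf_bracket (1 : {poly R}) ('X^2) = 2%:R *: 'X).
Proof.
split.
  move=> Phi; split.
    move=> H.
    have Hall : forall n m, Phi n m = Phi 0 0.
      move=> n m.
      rewrite (@int_const _ (fun n => Phi n m) (fun n => (@sym_loc R al1 al2 h1 h2 h12 Phi n m H).1) n).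
      exact: (@int_const _ (fun m => Phi 0 m) (fun m => (@sym_loc R al1 al2 h1 h2 h12 Phi 0 m H).2) m).
    set F := Phi 0 0.
    have HF : forall a b c, lskdvA al1 al2 a b c != 0 ->
      let d := lskdv_x11 al1 al2 a b c in
      F.[a] * dQ_a al1 al2 a b c d + F.[b] * dQ_b al1 al2 a b c d
      + F.[c] * dQ_c al1 al2 a b c d + F.[d] * dQ_d al1 al2 a b c d = 0.
      move=> a b c hA; have := H 0 0 a b c hA; by rewrite /= !Hall.
    exists F`_0, F`_1, F`_2 => n m; rewrite Hall -/F.
    apply/polyP => i.
    rewrite !coefD coefC !coefZ coefX coefXn.
    case: i => [|[|[|j]]] /=; rewrite ?mulr0 ?mulr1 ?addr0 ?add0r //.
    exact: (@deg_le2 R al1 al2 h1 h2 h12 F HF j.+3).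
  case=> c0 [c1 [c2 E]] n m a b c hA /=.
  rewrite !E; exact: quad_sym.
rewrite /vf_bracket !(derivX, derivC, derivXn).
split; first by rewrite mul1r mulr0 subr0.
split; last by rewrite mul1r mulr0 subr0 expr1 scaler_nat.
by rewrite expr1 mulrnAr -expr2 mulr2n mulr1 addrK.
Qed.
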